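(* Fix $0<s\le1$, let $\rho:=\rho(s)=e^s/s$, and let $\phi:(0,1]\to[1,\infty)$ be integrable. If there exists a tight $(\rho,\chi)$-bidding profile induced by $\phi$, then for all $x\in(0,1]$, \[ \phi(x)\ge\max\left(1,\ s\chi\, e^{s(x-1)}\right). \]
   Context: Given $1<\chi\le\rho$, a $(\rho,\chi)$-bidding profile is a non-decreasing, left-continuous $G:\mathbb{R}\to(0,\infty)$ with (offset) $G(x)<1$ for $x<0$ and $G(x)\ge1$ for $x>0$; (robustness) $\int_{-\infty}^{x+1}G(t)\,\mathrm{d} t\le\rho G(x)$ for all $x\in\mathbb{R}$; (consistency) $\int_{-\infty}^1G(t)\,\mathrm{d} t\le\chi$. It is tight if additionally $\int_{-\infty}^{x+1}G(t)\,\mathrm{d} t=\rho G(x)$ for all $x\le0$ and $\int_{-\infty}^1G(t)\,\mathrm{d} t=\chi$. It is induced by $\phi$ if $G|_{(0,1]}\equiv\phi$. *)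

(* Defs.v *)
From HB Require Import structures.
From mathcomp Require Import all_boot all_order all_algebra.
From mathcomp Require Import all_classical all_reals all_analysis.
Set Implicit Arguments. Unset Strict Implicit. Unset Printing Implicit Defensive.
Import Order.TTheory GRing.Theory Num.Theory.
Import numFieldNormedType.Exports.
Local Open Scope classical_set_scope.
Local Open Scope ring_scope.

(* Integral of G over (-oo, a], a Lebesgue integral in the extended reals
   (G is positive, so this is the improper integral \int_{-oo}^a G). *)
Definition int_upto (R : realType) (G : R -> R) (a : R) : \bar R :=
  (\int[@lebesgue_measure R]_(t in `]-oo, a]) (G t)%:E)%E.

Definition bidding_profile (R : realType) (rho chi : R) (G : R -> R) : Prop :=
  [/\ (forall x y : R, x <= y -> G x <= G y),
      (forall x : R, G t @[t --> x^'-] --> G x),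
      (forall x : R, 0 < G x) /\
      ((forall x : R, x < 0 -> G x < 1) /\ (forall x : R, 0 < x -> 1 <= G x)),
      (forall x : R, (int_upto G (x + 1) <= (rho * G x)%:E)%E)
    & (int_upto G 1 <= chi%:E)%E ].

Definition tight_bidding_profile (R : realType) (rho chi : R) (G : R -> R) : Prop :=
  [/\ bidding_profile rho chi G,
      (forall x : R, x <= 0 -> int_upto G (x + 1) = (rho * G x)%:E)
    & int_upto G 1 = chi%:E ].

Definition induced_by (R : realType) (G phi : R -> R) : Prop :=
  forall x : R, 0 < x <= 1 -> G x = phi x.

(* Main.v *)
Require Import Defs.
From HB Require Import structures.
From mathcomp Require Import all_boot all_order all_algebra.
From mathcomp Require Import all_classical all_reals all_analysis.
Import Order.TTheory GRing.Theory Num.Theory.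
Import numFieldNormedType.Exports.
Local Open Scope classical_set_scope.
Local Open Scope ring_scope.
From mathcomp Require Import ring lra.

Set Implicit Arguments. Unset Strict Implicit.
Lemma I_step (R : realType) (G : R -> R) :
  (forall x y : R, x <= y -> G x <= G y) -> (forall x, 0 < G x) ->
  forall a b : R, a <= b ->
  (int_upto G a + ((b - a) * G a)%:E <= int_upto G b)%E.
Proof.
move=> Gnd Gpos a b ab.
rewrite /int_upto.
have -> : `]-oo, b]%classic = `]-oo, a]%classic `|` `]a, b]%classic :> set R.
  by apply: itv_bndbnd_setU; rewrite ?bnd_simp.
rewrite ge0_integral_setU //; last 3 first.
- apply/measurable_realfun.measurable_EFinP.
  apply: measurable_realfun.nondecreasing_measurable => //.
  exact: measurableU.
- by move=> x _ /=; rewrite lee_fin ltW.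
- apply/eqP/seteqP; split => // x [/=]; rewrite !in_itv /= => xa /andP[ax _].
  by move: (lt_le_trans ax xa); rewrite ltxx.
apply: leeD2l.
have -> : ((b - a) * G a)%:E = (\int[lebesgue_measure]_(x in `]a, b]) (cst (G a)%:E) x)%E.
  rewrite integral_cst //= lebesgue_measure_itv /= lte_fin.
  case: ltgtP ab => // [ab _|-> _]; first by rewrite -EFinD -EFinM mulrC.
  by rewrite subrr mul0r mule0.
apply: ge0_le_integral => //.
- by move=> x _; rewrite lee_fin ltW.
- apply/measurable_realfun.measurable_EFinP.
  exact: measurable_realfun.nondecreasing_measurable.
- move=> x; rewrite /= in_itv /= => /andP[ax _]; rewrite lee_fin.
  by apply: Gnd; apply: ltW.
Qed.
Lemma L2 (R : realType) (h : R) : 0 <= h -> expR (h / (1 + h)) <= 1 + h.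
Proof.
move=> h0.
have h1 : 0 < 1 + h by lra.
have := expR_ge1Dx (- (h / (1 + h))).
rewrite expRN.
have -> : 1 + - (h / (1 + h)) = (1 + h)^-1.
  by field; rewrite gt_eqF.
rewrite lef_pV2 ?posrE ?expR_gt0 //.
Qed.

Lemma L3 (R : realType) (b : R) (n : nat) : 0 <= b ->
  expR (b - b ^+ 2 / (n.+1%:R + b)) <= (1 + b / n.+1%:R) ^+ n.+1.
Proof.
move=> b0.
have N0 : 0 < n.+1%:R :> R by rewrite ltr0n.
have hb : 0 <= b / n.+1%:R by rewrite divr_ge0 // ltW.
have -> : b - b ^+ 2 / (n.+1%:R + b) = n.+1%:R * ((b / n.+1%:R) / (1 + b / n.+1%:R)).
  have n0 : 0 <= n%:R :> R := ler0n _ _.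
  field; apply/andP; split; rewrite gt_eqF //.
  have : 0 < 1 + n%:R :> R by rewrite ltr_pwDl.
  move=> H1; lra.
rewrite expRM_natl.
rewrite lerXn2r ?nnegrE ?expR_ge0 //; first by apply: addr_ge0.
exact: L2.
Qed.

Lemma L4 (R : realType) (A B b : R) : 0 <= B -> 0 <= b ->
  (forall n : nat, expR (b - b ^+ 2 / (n.+1%:R + b)) * B <= A) ->
  expR b * B <= A.
Proof.
move=> B0 b0 H.
apply/ler_addgt0Pr => e e0.
set c := b ^+ 2 * expR b * B.
have c0 : 0 <= c by rewrite /c !mulr_ge0 ?expR_ge0 ?sqr_ge0.
set n := Num.trunc (c / e).
have hn : c / e < n.+1%:R := truncnS_gt _.
set N := n.+1%:R : R.
have N0 : 0 < N by rewrite ltr0n.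
set eps := b ^+ 2 / (N + b).
have Hn := H n; rewrite -/N -/eps in Hn.
have eps0 : 0 <= eps by rewrite divr_ge0 ?sqr_ge0 // addr_ge0 // ltW.
have eN : eps <= b ^+ 2 / N.
  by rewrite ler_pdivrMr ?ltr_wpDr // mulrAC ler_pdivlMr // ler_wpM2l ?sqr_ge0 // lerDl.
have h1 : expR b * (1 - eps) <= expR (b - eps).
  by rewrite expRD ler_wpM2l ?expR_ge0 // expR_ge1Dx.
have h2 : c * (N^-1) <= e.
  by rewrite -(ler_pM2r N0) mulrVK ?unitfE ?gt_eqF // -ler_pdivrMl // mulrC ltW.
have h3 : expR b * B * eps <= c * N^-1.
  have -> : c * N^-1 = expR b * B * (b ^+ 2 / N) by rewrite /c; ring.
  by rewrite ler_wpM2l // mulr_ge0 ?expR_ge0.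
have h4 : expR b * B * (1 - eps) <= A.
  apply: le_trans Hn; rewrite mulrAC ler_wpM2r //.
have : expR b * B - expR b * B * eps <= A by rewrite -[X in X - _]mulr1 -mulrBr.
move=> h5.
have h6 : expR b * B * eps <= e := le_trans h3 h2.
set X := expR b * B * eps in h5 h6.
set Y := expR b * B in h5 h6 *.
lra.
Qed.

Lemma L5 (R : realType) (s r : R) : 0 < s -> s <= 1 -> r < s -> r < s * expR (r - s).
Proof.
move=> s0 s1 rs.
have h : 1 + (r - s) < expR (r - s) by apply: expR_gt1Dx; rewrite subr_eq0 lt_eqF.
have h2 : s * (1 + (r - s)) < s * expR (r - s) by rewrite ltr_pM2l.
have h3 : r <= s * (1 + (r - s)).
  have : s * (s - r) <= 1 * (s - r) by rewrite ler_wpM2r // subr_ge0 ltW.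
  rewrite mul1r => H. 
  have -> : s * (1 + (r - s)) = s - s * (s - r) by ring.
  lra.
lra.
Qed.

Lemma L1 (R : realType) (i G : R -> R) (a : R) : 0 <= a ->
  (forall u, 0 <= i u) ->
  (forall u v, u <= v -> i u + (v - u) * G u <= i v) ->
  (forall u, a * i u <= G u) ->
  forall x t (n : nat), 0 <= t -> (1 + a * t / n.+1%:R) ^+ n.+1 * i x <= i (x + t).
Proof.
move=> a0 i0 Hs HG x t n t0.
set N := n.+1%:R : R.
have N0 : 0 < N by rewrite ltr0n.
set h := t / N.
have h0 : 0 <= h by rewrite divr_ge0 // ltW.
have key : forall k : nat, (1 + a * h) ^+ k * i x <= i (x + k%:R * h).
  elim=> [|k IH]; first by rewrite expr0 mul1r mul0r addr0.
  have step := Hs (x + k%:R * h) (x + k.+1%:R * h).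
  have le1 : x + k%:R * h <= x + k.+1%:R * h by rewrite lerD2l ler_wpM2r // ler_nat.
  have := step le1.
  have -> : x + k.+1%:R * h - (x + k%:R * h) = h by rewrite mulrS; ring.
  move=> st.
  apply: le_trans st.
  have hg := HG (x + k%:R * h).
  have : (1 + a * h) * i (x + k%:R * h) <= i (x + k%:R * h) + h * G (x + k%:R * h).
    rewrite mulrDl mul1r lerD2l mulrAC [h * _]mulrC ler_wpM2r //.
  apply: le_trans.
  rewrite exprS -mulrA ler_wpM2l //.
  by apply: addr_ge0 => //; rewrite mulr_ge0.
have := key n.+1.
have e1 : N * (t / N) = t by rewrite mulrC divfK // gt_eqF.
by rewrite /h -/N e1 mulrA.
Qed.

Lemma core (R : realType) (s : R) (G i : R -> R) : 0 < s -> s <= 1 ->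
  (forall x, 0 < G x) -> (forall x, 0 <= i x) ->
  (forall u v, u <= v -> i u + (v - u) * G u <= i v) ->
  (forall x, i (x + 1) <= expR s / s * G x) ->
  forall x t, 0 <= t -> expR (s * t) * i x <= i (x + t).
Proof.
move=> s0 s1 Gpos i0 Hs Hr.
set rho := expR s / s.
have rho0 : 0 < rho by rewrite divr_gt0 ?expR_gt0.
have ipos : forall x, 0 < i x.
  move=> x; have le : x - 1 <= x by rewrite gerBl.
  have := Hs _ _ le.
  have -> : x - (x - 1) = 1 by ring.
  rewrite mul1r => H; apply: lt_le_trans H.
  by rewrite ltr_wpDl.
have Hmono : forall x, i x <= i (x + 1).
  move=> x; have le : x <= x + 1 by rewrite lerDl.
  have := Hs _ _ le; apply: le_trans; rewrite lerDl mulr_ge0 // ?ltW //.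
  by rewrite addrC addKr.
pose E := fun y : R => exists x, y = i (x + 1) / i x.
have E1 : lbound E 1.
  move=> y [x ->]; by rewrite ler_pdivlMr // mul1r.
have hE : has_lbound E by exists 1.
have nE : nonempty E by exists (i (0 + 1) / i 0), 0.
set m := inf E.
have m1 : 1 <= m by apply: lb_le_inf.
have m0 : 0 < m by apply: lt_le_trans m1.
have hm : forall x, m * i x <= i (x + 1).
  move=> x; have := ge_inf hE (ex_intro _ x erefl : E (i (x + 1) / i x)).
  by rewrite -/m ler_pdivlMr.
set a := m / rho.
have a0 : 0 <= a by rewrite divr_ge0 // ltW.
have haG : forall u, a * i u <= G u.
  move=> u; rewrite /a mulrAC ler_pdivrMr // mulrC.
  rewrite mulrC [G u * _]mulrC; exact: le_trans (hm u) (Hr u).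
have ea : expR a <= m.
  have := @L4 R m 1 a ler01 a0; rewrite mulr1; apply => n.
  rewrite mulr1; apply: lb_le_inf => // y [x ->].
  rewrite ler_pdivlMr //; apply: le_trans (L1 a0 i0 Hs haG x n ler01).
  rewrite ler_wpM2r ?i0 // mulr1; exact: L3.
set r := ln m.
have mr : m = expR r by rewrite /r lnK // posrE.
have sr : s <= r.
  rewrite leNgt; apply/negP => rs.
  have := L5 s0 s1 rs.
  have -> : s * expR (r - s) = a.
    have es : expR s != 0 by rewrite gt_eqF ?expR_gt0.
    have sn : s != 0 by rewrite gt_eqF.
    by rewrite /a mr /rho expRD expRN; field; rewrite ?es ?sn.
  apply/negP; rewrite -leNgt -ler_expR -mr //.
have ms : expR s <= m by rewrite mr ler_expR.
have hsG : forall u, s * i u <= G u.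
  move=> u; apply: le_trans (haG u).
  rewrite ler_wpM2r ?i0 //.
  by rewrite /a /rho ler_pdivlMr // mulrC divfK ?gt_eqF.
move=> x t t0.
have st0 : 0 <= s * t by rewrite mulr_ge0 // ltW.
have := @L4 R (i (x + t)) (i x) (s * t) (i0 x) st0; apply => n.
apply: le_trans (L1 (ltW s0) i0 Hs hsG x n t0).
rewrite ler_wpM2r //; exact: L3.
Qed.

Unset Implicit Arguments. Set Strict Implicit.

Theorem lemma9 (R : realType) (s chi : R) (phi : R -> R) :
  0 < s -> s <= 1 ->
  1 < chi -> chi <= expR s / s ->
  (forall x : R, 0 < x <= 1 -> 1 <= phi x) ->
  (@lebesgue_measure R).-integrable `]0, 1] (EFin \o phi) ->
  (exists G : R -> R,
      tight_bidding_profile (expR s / s) chi G /\ induced_by G phi) ->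
  forall x : R, 0 < x <= 1 ->
    Num.max 1 (s * chi * expR (s * (x - 1))) <= phi x.
Proof.
move=> s0 s1 chi1 chirho phi1 phiint [G [[bp Gt GI1] ind]] y /andP[y0 y1].
case: bp => Gnd Glc [Gpos [off1 off2]] Grob Gcons.
set rho := expR s / s.
have rho0 : 0 < rho by rewrite divr_gt0 ?expR_gt0.
have I0 : forall a, (0 <= int_upto G a)%E.
  by move=> a; apply: integral_ge0 => x _; rewrite lee_fin ltW.
have fin : forall a, int_upto G a \is a fin_num.
  move=> a; have := Grob (a - 1); rewrite subrK => H.
  by rewrite ge0_fin_numE //; apply: le_lt_trans H (ltey _).
pose i := fun a => fine (int_upto G a).
have iE : forall a, int_upto G a = (i a)%:E by move=> a; rewrite fineK.
have i0 : forall a, 0 <= i a by move=> a; rewrite -lee_fin -iE.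
have Hs : forall u v, u <= v -> i u + (v - u) * G u <= i v.
  by move=> u v uv; have := I_step Gnd Gpos uv; rewrite !iE -EFinD lee_fin.
have Hr : forall x, i (x + 1) <= rho * G x.
  by move=> x; have := Grob x; rewrite iE lee_fin.
have i1 : i 1 = chi by rewrite /i GI1.
have H := core s0 s1 Gpos i0 Hs Hr 1 (ltW y0).
rewrite i1 addrC in H.
rewrite -(ind y); last by rewrite y0 y1.
rewrite ge_max; apply/andP; split; first exact: off2.
have -> : s * chi * expR (s * (y - 1)) = expR (s * y) * chi / rho.
  have es : expR s != 0 by rewrite gt_eqF ?expR_gt0.
  have sn : s != 0 by rewrite gt_eqF.
  by rewrite /rho mulrBr mulr1 expRD expRN; field; rewrite ?es ?sn.
rewrite ler_pdivrMr // [G y * _]mulrC.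
exact: le_trans H (Hr y).
Qed.
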